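(* Let $\Gamma$ be a basis and $\sigma\in\mathbb{T}$ with $\sigma\neq\omega$ (i.e. $\sigma$ is not equivalent to $\omega$). Then: (1) $\Gamma\vdash x:\sigma$ iff there is $\tau$ with $x:\tau\in\Gamma$ and $\tau\le\sigma$; (2) $\Gamma\vdash\lambda x.M:\sigma$ iff there exist a finite set $I$ and types $(\sigma_i)_{i\in I},(\tau_i)_{i\in I}$ with $\Gamma,x:\sigma_i\vdash M:\tau_i$ for all $i\in I$ and $\bigcap_{i\in I}(\sigma_i\to\tau_i)\le\sigma$; (3) $\Gamma\vdash MN:\sigma$ iff there is $\tau$ with $\Gamma\vdash M:\tau\to\sigma$ and $\Gamma\vdash N:\tau$; (4) $\Gamma\vdash\langle l_i=M_i\mid i\in I\rangle:\sigma$ iff for each $i\in I$ there is $\sigma_i$ with $\Gamma\vdash M_i:\sigma_i$ and $\langle l_i:\sigma_i\mid i\in I\rangle\le\sigma$; (5) $\Gamma\vdash M.l:\sigma$ iff $\Gamma\vdash M:\langle l:\sigma\rangle$; (6) $\Gamma\vdash M\oplus R:\sigma$ iff there exist $\rho_1,\rho_2$ with $\Gamma\vdash M:\rho_1$, $\Gamma\vdash R:\rho_2$, $\mathit{lbl}(R)=\mathit{lbl}(\rho_2)$ and $\rho_1+\rho_2\le\sigma$.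
   Context: \textbf{Terms.} $\Lambda_R\ni M,N ::= x\mid\lambda x.M\mid MN\mid M.l\mid R\mid M\oplus R$, records $R ::= \langle l_i=M_i\mid i\in I\rangle$ ($I$ finite, labels pairwise distinct), $\mathit{lbl}(\langle l_i=M_i\mid i\in I\rangle)=\{l_i\mid i\in I\}$. \textbf{Types.} $\mathbb{T}\ni\sigma ::= a\mid\omega\mid\sigma_1\to\sigma_2\mid\sigma_1\cap\sigma_2\mid\rho$, $\mathbb{T}_R\ni\rho ::= \langle\rangle\mid\langle l:\sigma\rangle\mid\rho_1+\rho_2\mid\rho_1\cap\rho_2$. Subtyping $\le$: least preorder with $\sigma\le\omega$; $\omega\le\omega\to\omega$; $\sigma\cap\tau\le\sigma,\tau$; $\sigma\le\tau_1,\sigma\le\tau_2\Rightarrow\sigma\le\tau_1\cap\tau_2$; $(\sigma\to\tau_1)\cap(\sigma\to\tau_2)\le\sigma\to\tau_1\cap\tau_2$; $\sigma_2\le\sigma_1,\tau_1\le\tau_2\Rightarrow\sigma_1\to\tau_1\le\sigma_2\to\tau_2$; $\langle l:\sigma\rangle\le\langle\rangle$; $\langle l:\sigma\rangle\cap\langle l:\tau\rangle\le\langle l:\sigma\cap\tau\rangle$; $\sigma\le\tau\Rightarrow\langle l:\sigma\rangle\le\langle l:\tau\rangle$; $\rho+\langle\rangle=\langle\rangle+\rho=\rho$; $(\rho_1+\rho_2)+\rho_3=\rho_1+(\rho_2+\rho_3)$; $(\rho_1\cap\rho_2)+\rho_3=(\rho_1+\rho_3)\cap(\rho_2+\rho_3)$;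 $\langle l:\sigma\rangle+(\langle l:\tau\rangle\cap\rho)=\langle l:\tau\rangle\cap\rho$; $\langle l:\sigma\rangle+(\langle l':\tau\rangle\cap\rho)=\langle l':\tau\rangle\cap(\langle l:\sigma\rangle+\rho)$ if $l\neq l'$; $\rho_1\le\rho_2\Rightarrow\rho_1+\rho\le\rho_2+\rho$; $\rho_1=\rho_2\Rightarrow\rho+\rho_1=\rho+\rho_2$ ($=$ is $\le$ both ways). Notation $\langle l_i:\sigma_i\mid i\in I\rangle=\bigcap_{i\in I}\langle l_i:\sigma_i\rangle$ ($\langle\rangle$ if $I=\emptyset$). $\mathit{lbl}(\langle\rangle)=\emptyset$, $\mathit{lbl}(\langle l:\sigma\rangle)=\{l\}$, $\mathit{lbl}(\rho_1\cap\rho_2)=\mathit{lbl}(\rho_1+\rho_2)=\mathit{lbl}(\rho_1)\cup\mathit{lbl}(\rho_2)$. \textbf{Type assignment.} A basis is a finite set of $x:\sigma$ with distinct variables; $\Gamma,x:\sigma$ presupposes $x\notin\mathrm{dom}(\Gamma)$. Rules: $\Gamma\vdash x:\sigma$ if $x:\sigma\in\Gamma$; from $\Gamma,x:\sigma\vdash M:\tau$ infer $\Gamma\vdash\lambda x.M:\sigma\to\tau$; from $\Gamma\vdash M:\sigma\to\tau$, $\Gamma\vdash N:\sigma$ infer $\Gamma\vdash MN:\tau$; $\cap$-introduction; $\Gamma\vdash M:\omega$; subsumption along $\le$; $\Gamma\vdash\langle l_i=M_i\mid i\in I\rangle:\langle\rangle$; from $\Gamma\vdash M_k:\sigma$, $k\in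 I$ infer $\Gamma\vdash\langle l_i=M_i\mid i\in I\rangle:\langle l_k:\sigma\rangle$; from $\Gamma\vdash M:\langle l:\sigma\rangle$ infer $\Gamma\vdash M.l:\sigma$; from $\Gamma\vdash M:\rho_1$, $\Gamma\vdash R:\rho_2$, $\mathit{lbl}(R)=\mathit{lbl}(\rho_2)$ infer $\Gamma\vdash M\oplus R:\rho_1+\rho_2$. *)

(* Defs.v *)
From Stdlib Require Import List.
Import ListNotations.

Definition var := nat.
Definition label := nat.
Definition atom := nat.

(* Terms of Lambda_R.  A record <l_i = M_i | i in I> is a list of
   (label, term) pairs; M (+) R takes the record R as its field list. *)
Inductive term : Type :=
| Var  : var -> term
| Lam  : var -> term -> term
| App  : term -> term -> term
| Proj : term -> label -> term
| Rcd  : list (label * term) -> term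
| Ext  : term -> list (label * term) -> term.

Inductive wf_term : term -> Prop :=
| wf_var x : wf_term (Var x)
| wf_lam x M : wf_term M -> wf_term (Lam x M)
| wf_app M N : wf_term M -> wf_term N -> wf_term (App M N)
| wf_proj M l : wf_term M -> wf_term (Proj M l)
| wf_rcd fs : NoDup (map fst fs) ->
    (forall l M, In (l, M) fs -> wf_term M) -> wf_term (Rcd fs)
| wf_ext M fs : wf_term M -> NoDup (map fst fs) ->
    (forall l M', In (l, M') fs -> wf_term M') -> wf_term (Ext M fs).

(* Raw type syntax; T and T_R are carved out by [wf_ty] and [is_rty]. *)
Inductive ty : Type :=
| TAtom   : atom -> ty
| TOmega  : ty
| TArrow  : ty -> ty -> ty
| TInter  : ty -> ty -> ty
| TREmpty : ty
| TRField : label -> ty -> ty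
| TRPlus  : ty -> ty -> ty.

(* membership in T_R (top-level shape) *)
Fixpoint is_rty (t : ty) : Prop :=
  match t with
  | TREmpty => True
  | TRField _ _ => True
  | TRPlus a b => is_rty a /\ is_rty b
  | TInter a b => is_rty a /\ is_rty b
  | _ => False
  end.

Fixpoint wf_ty (t : ty) : Prop :=
  match t with
  | TAtom _ | TOmega | TREmpty => True
  | TArrow a b | TInter a b => wf_ty a /\ wf_ty b
  | TRField _ s => wf_ty s
  | TRPlus a b => is_rty a /\ is_rty b /\ wf_ty a /\ wf_ty b
  end.

Fixpoint lbl (t : ty) : list label :=
  match t with
  | TRField l _ => [l]
  | TRPlus a b | TInter a b => lbl a ++ lbl b
  | _ => []
  end.

(* Subtyping: least preorder closed under the rules of the paper.
   Transitivity goes through types of T only, so that on T this is exactly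
   the paper's relation. *)
Inductive le : ty -> ty -> Prop :=
| le_refl s : le s s
| le_trans s t u : wf_ty t -> le s t -> le t u -> le s u
| le_omega s : le s TOmega
| le_omega_arrow : le TOmega (TArrow TOmega TOmega)
| le_inter_l s t : le (TInter s t) s
| le_inter_r s t : le (TInter s t) t
| le_inter_glb s t1 t2 : le s t1 -> le s t2 -> le s (TInter t1 t2)
| le_arrow_inter s t1 t2 :
    le (TInter (TArrow s t1) (TArrow s t2)) (TArrow s (TInter t1 t2))
| le_arrow s1 s2 t1 t2 : le s2 s1 -> le t1 t2 -> le (TArrow s1 t1) (TArrow s2 t2)
| le_field_empty l s : le (TRField l s) TREmpty
| le_field_inter l s t : le (TInter (TRField l s) (TRField l t)) (TRField l (TInter s t))
| le_field l s t : le s t -> le (TRField l s) (TRField l t)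
| le_plus_empty_r1 r : is_rty r -> le (TRPlus r TREmpty) r
| le_plus_empty_r2 r : is_rty r -> le r (TRPlus r TREmpty)
| le_plus_empty_l1 r : is_rty r -> le (TRPlus TREmpty r) r
| le_plus_empty_l2 r : is_rty r -> le r (TRPlus TREmpty r)
| le_plus_assoc1 r1 r2 r3 : is_rty r1 -> is_rty r2 -> is_rty r3 ->
    le (TRPlus (TRPlus r1 r2) r3) (TRPlus r1 (TRPlus r2 r3))
| le_plus_assoc2 r1 r2 r3 : is_rty r1 -> is_rty r2 -> is_rty r3 ->
    le (TRPlus r1 (TRPlus r2 r3)) (TRPlus (TRPlus r1 r2) r3)
| le_plus_distr1 r1 r2 r3 : is_rty r1 -> is_rty r2 -> is_rty r3 ->
    le (TRPlus (TInter r1 r2) r3) (TInter (TRPlus r1 r3) (TRPlus r2 r3))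
| le_plus_distr2 r1 r2 r3 : is_rty r1 -> is_rty r2 -> is_rty r3 ->
    le (TInter (TRPlus r1 r3) (TRPlus r2 r3)) (TRPlus (TInter r1 r2) r3)
| le_plus_same1 l s t r : is_rty r ->
    le (TRPlus (TRField l s) (TInter (TRField l t) r)) (TInter (TRField l t) r)
| le_plus_same2 l s t r : is_rty r ->
    le (TInter (TRField l t) r) (TRPlus (TRField l s) (TInter (TRField l t) r))
| le_plus_diff1 l l' s t r : l <> l' -> is_rty r ->
    le (TRPlus (TRField l s) (TInter (TRField l' t) r))
       (TInter (TRField l' t) (TRPlus (TRField l s) r))
| le_plus_diff2 l l' s t r : l <> l' -> is_rty r ->
    le (TInter (TRField l' t) (TRPlus (TRField l s) r))
       (TRPlus (TRField l s) (TInter (TRField l' t) r))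
| le_plus_mono_l r1 r2 r : is_rty r1 -> is_rty r2 -> is_rty r ->
    le r1 r2 -> le (TRPlus r1 r) (TRPlus r2 r)
| le_plus_cong_r r r1 r2 : is_rty r -> is_rty r1 -> is_rty r2 ->
    le r1 r2 -> le r2 r1 -> le (TRPlus r r1) (TRPlus r r2).

Definition basis := list (var * ty).
Definition dom (G : basis) : list var := map fst G.
Definition is_basis (G : basis) : Prop :=
  NoDup (dom G) /\ (forall x s, In (x, s) G -> wf_ty s).

Inductive typ : basis -> term -> ty -> Prop :=
| t_var G x s : In (x, s) G -> typ G (Var x) s
| t_lam G x M s t : ~ In x (dom G) -> wf_ty s ->
    typ ((x, s) :: G) M t -> typ G (Lam x M) (TArrow s t)
| t_app G M N s t : typ G M (TArrow s t) -> typ G N s -> typ G (App M N) t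
| t_inter G M s t : typ G M s -> typ G M t -> typ G M (TInter s t)
| t_omega G M : typ G M TOmega
| t_sub G M s t : typ G M s -> le s t -> wf_ty t -> typ G M t
| t_rempty G fs : typ G (Rcd fs) TREmpty
| t_rfield G fs l M s : In (l, M) fs -> typ G M s -> typ G (Rcd fs) (TRField l s)
| t_proj G M l s : typ G M (TRField l s) -> typ G (Proj M l) s
| t_ext G M fs r1 r2 : is_rty r1 -> is_rty r2 ->
    typ G M r1 -> typ G (Rcd fs) r2 ->
    (forall l, In l (map fst fs) <-> In l (lbl r2)) ->
    typ G (Ext M fs) (TRPlus r1 r2).

Fixpoint big_inter (l : list ty) : ty :=
  match l with
  | [] => TOmega
  | [a] => a
  | a :: r => TInter a (big_inter r)
  end.

Fixpoint rec_ty (l : list (label * ty)) : ty :=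
  match l with
  | [] => TREmpty
  | [(a, s)] => TRField a s
  | (a, s) :: r => TInter (TRField a s) (rec_ty r)
  end.

(* Main.v *)
Require Import Defs.
From Stdlib Require Import List Arith Lia.
Import ListNotations.

Definition eqv a b := le a b /\ le b a.

Fixpoint nf (L : list (label*ty)) : ty :=
  match L with [] => TREmpty | (l,t)::L' => TInter (TRField l t) (nf L') end.
Definition wfL (L : list (label*ty)) := forall l t, In (l,t) L -> wf_ty t.

Lemma nf_rty L : is_rty (nf L).
Proof. induction L as [|[l t] L IH]; simpl; auto. Qed.
Lemma nf_wf L : wfL L -> wf_ty (nf L).
Proof. induction L as [|[l t] L IH]; simpl; intros H; auto.
  split; [apply (H l); simpl; auto| apply IH; intros l' t' Hi; apply (H l'); simpl; auto]. Qed.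
Lemma wfL_cons l t L : wfL ((l,t)::L) -> wf_ty t /\ wfL L.
Proof. intros H; split; [apply (H l); simpl; auto| intros l' t' Hi; apply (H l'); simpl; auto]. Qed.
Lemma wfL_app L1 L2 : wfL L1 -> wfL L2 -> wfL (L1++L2).
Proof. intros H1 H2 l t Hi; apply in_app_or in Hi; destruct Hi; eauto. Qed.
Lemma lbl_nf L : lbl (nf L) = map fst L.
Proof. induction L as [|[l t] L IH]; simpl; auto. rewrite IH; auto. Qed.

Global Hint Resolve nf_rty nf_wf wfL_app : wfdb.
Ltac wfs := simpl; intuition (eauto with wfdb).
Ltac tr m := apply (le_trans _ m); [wfs | | ].

Lemma nf_le_empty L : wfL L -> le (nf L) TREmpty.
Proof. destruct L as [|[l t] L]; simpl; intros H. apply le_refl.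
  apply wfL_cons in H as [H1 H2].
  tr (TRField l t). apply le_inter_l. apply le_field_empty. Qed.

Lemma nf_mem L l t : wfL L -> In (l,t) L -> le (nf L) (TRField l t).
Proof. induction L as [|[l' t'] L IH]; simpl; intros H Hi; [destruct Hi|].
  apply wfL_cons in H as [H1 H2]. destruct Hi as [E|Hi].
  - inversion E; subst. apply le_inter_l.
  - tr (nf L). apply le_inter_r. auto. Qed.

Lemma nf_incl L1 L2 : wfL L1 -> incl L2 L1 -> le (nf L1) (nf L2).
Proof. intros H1; induction L2 as [|[l t] L2 IH]; simpl; intros Hi.
  apply nf_le_empty; auto.
  apply le_inter_glb. apply nf_mem; auto. apply Hi; simpl; auto.
  apply IH. intros x Hx; apply Hi; simpl; auto. Qed.

Lemma nf_eqv L1 L2 : wfL L1 -> wfL L2 -> incl L2 L1 -> incl L1 L2 -> eqv (nf L1) (nf L2).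
Proof. split; apply nf_incl; auto. Qed.

Lemma nf_glb s L : (forall l t, In (l,t) L -> le s (TRField l t)) -> le s TREmpty -> le s (nf L).
Proof. induction L as [|[l t] L IH]; simpl; intros H He; auto.
  apply le_inter_glb; auto. Qed.

Lemma nf_app L1 L2 : wfL L1 -> wfL L2 -> eqv (TInter (nf L1) (nf L2)) (nf (L1++L2)).
Proof. intros H1 H2; split.
  - apply nf_glb. intros l t Hi. apply in_app_or in Hi as [Hi|Hi].
    tr (nf L1). apply le_inter_l. apply nf_mem; auto.
    tr (nf L2). apply le_inter_r. apply nf_mem; auto.
    tr (nf L1). apply le_inter_l. apply nf_le_empty; auto.
  - apply le_inter_glb; apply nf_incl; auto with wfdb; intros x Hx; apply in_or_app; auto. Qed.

Lemma eqv_trans a b c : wf_ty b -> eqv a b -> eqv b c -> eqv a c.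
Proof. intros W [] []; split; eapply le_trans; eauto. Qed.
Lemma eqv_sym a b : eqv a b -> eqv b a.
Proof. intros []; split; auto. Qed.
Lemma eqv_refl a : eqv a a.
Proof. split; apply le_refl. Qed.

Lemma inter_mono a b a' b' : wf_ty a -> wf_ty b -> le a a' -> le b b' -> le (TInter a b) (TInter a' b').
Proof. intros; apply le_inter_glb. tr a. apply le_inter_l. auto. tr b. apply le_inter_r. auto. Qed.
Lemma inter_eqv a b a' b' : wf_ty a -> wf_ty b -> wf_ty a' -> wf_ty b' -> eqv a a' -> eqv b b' -> eqv (TInter a b) (TInter a' b').
Proof. intros ? ? ? ? [] []; split; apply inter_mono; auto. Qed.

Lemma field_nf l t : wf_ty t -> eqv (TRField l t) (nf [(l,t)]).
Proof. intros; simpl; split. apply le_inter_glb. apply le_refl. apply le_field_empty. apply le_inter_l. Qed.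

Lemma E12 l s L : wfL L -> wf_ty s ->
  (In l (map fst L) -> eqv (TRPlus (TRField l s) (nf L)) (nf L)) /\
  (~ In l (map fst L) -> eqv (TRPlus (TRField l s) (nf L)) (nf ((l,s)::L))).
Proof.
  intros HL Hs; induction L as [|[l' t] L IH]; simpl.
  - split; [intros []|intros _]. split.
    tr (TRField l s). apply le_plus_empty_r1; simpl; auto. apply le_inter_glb. apply le_refl. apply le_field_empty.
    tr (TRField l s). apply le_inter_l. apply le_plus_empty_r2; simpl; auto.
  - apply wfL_cons in HL as [Ht HL]. specialize (IH HL) as [IH1 IH2].
    destruct (Nat.eq_dec l' l) as [->|Hne].
    + split; [intros _|intros Hn; exfalso; auto].
      split. apply le_plus_same1; apply nf_rty. apply le_plus_same2; apply nf_rty.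
    + assert (Hd : eqv (TRPlus (TRField l s) (TInter (TRField l' t) (nf L)))
                      (TInter (TRField l' t) (TRPlus (TRField l s) (nf L)))).
      { split. apply le_plus_diff1; auto using nf_rty. apply le_plus_diff2; auto using nf_rty. }
      split.
      * intros [E|Hi]; [congruence|].
        eapply eqv_trans; [|exact Hd|]. wfs. 
        apply inter_eqv; wfs. apply eqv_refl.
      * intros Hn. eapply eqv_trans; [|exact Hd|]. wfs.
        apply (eqv_trans _ (nf ((l',t)::(l,s)::L))). wfs.
        apply (inter_eqv); wfs. all: try apply eqv_refl. all: try (apply IH2; auto).
        apply (nf_eqv _ ((l,s)::(l',t)::L)).
        all: try (intros ? ? Hi; simpl in Hi; intuition (subst; eauto; congruence)).
        all: intros x Hx; simpl in *; tauto.
Qed.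

Lemma plus_eqv A B A' B' : is_rty A -> is_rty B -> is_rty A' -> is_rty B' ->
  wf_ty A -> wf_ty B -> wf_ty A' -> wf_ty B' -> eqv A A' -> eqv B B' ->
  eqv (TRPlus A B) (TRPlus A' B').
Proof. intros ? ? ? ? ? ? ? ? [] []; split.
  - tr (TRPlus A' B). apply le_plus_mono_l; auto. apply le_plus_cong_r; auto.
  - tr (TRPlus A B'). apply le_plus_mono_l; auto. apply le_plus_cong_r; auto. Qed.

Lemma PL LA LB : wfL LA -> wfL LB -> exists L, wfL L /\ eqv (TRPlus (nf LA) (nf LB)) (nf L) /\
  (forall x, In x (map fst L) <-> In x (map fst LA) \/ In x (map fst LB)).
Proof.
  intros HA HB; induction LA as [|[l t] LA IH]; simpl.
  - exists LB; split; auto; split; [|tauto]. split.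
    apply le_plus_empty_l1; apply nf_rty. apply le_plus_empty_l2; apply nf_rty.
  - apply wfL_cons in HA as [Ht HA]. destruct (IH HA) as [L' [HL' [HE' Hl']]].
    destruct (E12 l t LB HB Ht) as [E1 E2].
    assert (Hd : eqv (TRPlus (TInter (TRField l t) (nf LA)) (nf LB))
                     (TInter (TRPlus (TRField l t) (nf LB)) (TRPlus (nf LA) (nf LB)))).
    { split. apply le_plus_distr1; simpl; auto using nf_rty. apply le_plus_distr2; simpl; auto using nf_rty. }
    destruct (in_dec Nat.eq_dec l (map fst LB)) as [Hi|Hn].
    + exists (LB ++ L'). split; [wfs|]. split.
      * eapply eqv_trans; [|exact Hd|]. wfs.
        eapply eqv_trans; [| |apply nf_app]; auto. wfs.
        apply inter_eqv; wfs.
      * intros x; rewrite map_app, in_app_iff, Hl'. simpl. intuition (subst; auto).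
    + exists ((l,t)::LB ++ L'). split.
      { intros a b Hab; simpl in Hab; destruct Hab as [Hab|Hab]; [inversion Hab; subst; auto|].
        apply (wfL_app _ _ HB HL' a); auto. }
      split.
      * eapply eqv_trans; [|exact Hd|]. wfs.
        assert (HW: wfL ((l,t)::LB)).
        { intros a b Hab; simpl in Hab; destruct Hab as [Hab|Hab]; [inversion Hab; subst; auto|eauto]. }
        apply (eqv_trans _ (TInter (nf ((l,t)::LB)) (nf L'))).
        { split; apply nf_wf; auto. }
        { apply inter_eqv; auto with wfdb; simpl; auto with wfdb. }
        apply (nf_app ((l,t)::LB)); auto.
      * intros x; simpl; rewrite map_app, in_app_iff, Hl'. simpl. intuition (subst; auto).
Qed.

Lemma Norm X : is_rty X -> wf_ty X -> exists L, wfL L /\ eqv X (nf L) /\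
  (forall x, In x (lbl X) <-> In x (map fst L)).
Proof.
  induction X; simpl; try tauto; intros HR HW.
  - destruct HR as [R1 R2]; destruct HW as [W1 W2].
    destruct (IHX1 R1 W1) as [L1 [H1 [E1 B1]]]; destruct (IHX2 R2 W2) as [L2 [H2 [E2 B2]]].
    exists (L1 ++ L2); split; [wfs|split].
    + eapply eqv_trans; [| |apply nf_app]; auto. wfs. apply inter_eqv; auto with wfdb.
    + intros x; rewrite map_app, !in_app_iff, B1, B2; tauto.
  - exists []; simpl; split; [intros ? ? []|split; [apply eqv_refl|tauto]].
  - exists [(l,X)]; split; [intros ? ? [E|[]]; inversion E; subst; auto|split].
    apply field_nf; auto. simpl; tauto.
  - destruct HR as [R1 R2]; destruct HW as [_ [_ [W1 W2]]].
    destruct (IHX1 R1 W1) as [L1 [H1 [E1 B1]]]; destruct (IHX2 R2 W2) as [L2 [H2 [E2 B2]]].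
    destruct (PL L1 L2 H1 H2) as [L [HL [E B]]].
    exists L; split; auto; split.
    + eapply eqv_trans; [| |exact E]. simpl; auto 10 with wfdb.
      apply plus_eqv; auto with wfdb.
    + intros x; rewrite B, in_app_iff, B1, B2; tauto.
Qed.

Lemma RM_field l t LX LY : wf_ty t -> wfL LX -> wfL LY -> le (nf LX) (nf LY) ->
  (forall x, In x (map fst LX) -> In x (map fst LY)) ->
  le (TRPlus (TRField l t) (nf LX)) (TRPlus (TRField l t) (nf LY)).
Proof.
  intros Ht HX HY Hle Hl.
  destruct (E12 l t LX HX Ht) as [X1 X2]; destruct (E12 l t LY HY Ht) as [Y1 Y2].
  destruct (in_dec Nat.eq_dec l (map fst LY)) as [Hi|Hn].
  - tr (nf LY); [|apply Y1; auto]. tr (nf LX); auto.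
    destruct (in_dec Nat.eq_dec l (map fst LX)) as [Hi'|Hn'].
    + apply X1; auto.
    + tr (nf ((l,t)::LX)). apply X2; auto. apply le_inter_r.
  - assert (Hn' : ~ In l (map fst LX)) by auto.
    tr (nf ((l,t)::LX)). apply X2; auto.
    tr (nf ((l,t)::LY)); [|apply Y2; auto].
    apply inter_mono; auto with wfdb. apply le_refl.
Qed.

Lemma RM_nf Lr LX LY : wfL Lr -> wfL LX -> wfL LY -> le (nf LX) (nf LY) ->
  (forall x, In x (map fst LX) -> In x (map fst LY)) ->
  le (TRPlus (nf Lr) (nf LX)) (TRPlus (nf Lr) (nf LY)).
Proof.
  intros Hr HX HY Hle Hl; induction Lr as [|[l t] Lr IH]; simpl.
  - tr (nf LX). apply le_plus_empty_l1; apply nf_rty.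
    tr (nf LY); auto. apply le_plus_empty_l2; apply nf_rty.
  - apply wfL_cons in Hr as [Ht Hr].
    tr (TInter (TRPlus (TRField l t) (nf LX)) (TRPlus (nf Lr) (nf LX))).
    apply le_plus_distr1; simpl; auto using nf_rty.
    tr (TInter (TRPlus (TRField l t) (nf LY)) (TRPlus (nf Lr) (nf LY))).
    apply inter_mono; [simpl; auto 10 with wfdb..| apply RM_field; auto | auto].
    apply le_plus_distr2; simpl; auto using nf_rty.
Qed.

Lemma RM r X Y : is_rty r -> is_rty X -> is_rty Y -> wf_ty r -> wf_ty X -> wf_ty Y ->
  le X Y -> (forall x, In x (lbl X) -> In x (lbl Y)) -> le (TRPlus r X) (TRPlus r Y).
Proof.
  intros R1 R2 R3 W1 W2 W3 Hle Hl.
  destruct (Norm r R1 W1) as [Lr [Hr [Er Br]]].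
  destruct (Norm X R2 W2) as [LX [HX [EX BX]]].
  destruct (Norm Y R3 W3) as [LY [HY [EY BY]]].
  tr (TRPlus (nf Lr) (nf LX)). apply (plus_eqv r X); auto with wfdb.
  tr (TRPlus (nf Lr) (nf LY)).
  2: apply (proj1 (plus_eqv (nf Lr) (nf LY) r Y ltac:(auto with wfdb) ltac:(auto with wfdb) ltac:(auto with wfdb) ltac:(auto with wfdb) ltac:(auto with wfdb) ltac:(auto with wfdb) ltac:(auto with wfdb) ltac:(auto with wfdb) (eqv_sym _ _ Er) (eqv_sym _ _ EY))).
  apply RM_nf; auto.
  tr X. apply EX. tr Y; auto. apply EY.
  intros x Hx; apply BY, Hl, BX; auto.
Qed.

Lemma rec_wf L : wfL L -> wf_ty (rec_ty L).
Proof. induction L as [|[a s] L IH]; intros H; simpl; auto.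
  apply wfL_cons in H as [H1 H2]. destruct L; simpl in *; auto. Qed.

Lemma rec_nf L : wfL L -> eqv (rec_ty L) (nf L).
Proof. induction L as [|[a s] L IH]; intros H; simpl. apply eqv_refl.
  apply wfL_cons in H as [H1 H2]. destruct L as [|p L].
  - apply field_nf; auto.
  - change (eqv (TInter (TRField a s) (rec_ty (p::L))) (TInter (TRField a s) (nf (p::L)))).
    apply inter_eqv; auto with wfdb. apply (rec_wf (p::L)); auto. apply eqv_refl. Qed.

Lemma big_wf l : (forall a, In a l -> wf_ty a) -> wf_ty (big_inter l).
Proof. induction l as [|a l IH]; simpl; intros H; auto. destruct l; simpl in *; auto. Qed.

Lemma big_mem l a : (forall a, In a l -> wf_ty a) -> In a l -> le (big_inter l) a.
Proof. induction l as [|b l IH]; simpl; intros H Hi; [destruct Hi|].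
  destruct l as [|c l].
  - destruct Hi as [->|[]]; apply le_refl.
  - destruct Hi as [->|Hi]. apply le_inter_l.
    apply (le_trans _ (big_inter (c::l))). apply (big_wf (c::l)); simpl in *; auto. apply le_inter_r. apply IH; auto. Qed.

Lemma big_glb s l : (forall a, In a l -> le s a) -> le s (big_inter l).
Proof. induction l as [|b l IH]; simpl; intros H. apply le_omega.
  destruct l. apply H; auto. apply le_inter_glb; auto. Qed.

Lemma big_typ G E l : (forall a, In a l -> typ G E a) -> typ G E (big_inter l).
Proof. induction l as [|b l IH]; simpl; intros H. apply t_omega.
  destruct l. apply H; auto. apply t_inter; auto. Qed.

Lemma typ_wf G E s : typ G E s -> is_basis G -> wf_ty s.
Proof.
  induction 1; intros HB; simpl in *; auto.
  - apply (proj2 HB x); auto.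
  - split; auto. apply IHtyp. destruct HB as [HN HW]. split.
    simpl; constructor; auto. intros y u [E|Hi]; [inversion E; subst; auto|eauto].
  - apply IHtyp1; auto.
  all: try (apply IHtyp; auto).
  all: intuition.
Qed.

Section Clos.
Variable P : ty -> Prop.
Hypothesis up : forall a b, P a -> wf_ty a -> le a b -> wf_ty b -> P b.
Hypothesis PI : forall a b, P a -> P b -> wf_ty a -> wf_ty b -> P (TInter a b).

Lemma clos_inter a b : wf_ty a -> wf_ty b -> (le TOmega a \/ P a) -> (le TOmega b \/ P b) ->
  le TOmega (TInter a b) \/ P (TInter a b).
Proof.
  intros Wa Wb [Ha|Ha] [Hb|Hb].
  - left; apply le_inter_glb; auto.
  - right; apply (up b); simpl; auto. apply le_inter_glb; [|apply le_refl]. tr TOmega. apply le_omega. auto.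
  - right; apply (up a); simpl; auto. apply le_inter_glb; [apply le_refl|]. tr TOmega. apply le_omega. auto.
  - right; auto.
Qed.

Lemma clos_sub a b : wf_ty a -> wf_ty b -> (le TOmega a \/ P a) -> le a b -> le TOmega b \/ P b.
Proof. intros Wa Wb [H|H] Hl. left; tr a; auto. right; eauto. Qed.
End Clos.

Lemma nodup_uniq {A B} (G : list (A*B)) x a b : NoDup (map fst G) -> In (x,a) G -> In (x,b) G -> a = b.
Proof. induction G as [|[y c] G IH]; simpl; intros HN Ha Hb; [destruct Ha|].
  inversion HN; subst. destruct Ha as [Ea|Ha]; destruct Hb as [Eb|Hb].
  - inversion Ea; inversion Eb; subst; auto.
  - inversion Ea; subst. exfalso; apply H1. apply (in_map fst) in Hb; auto.
  - inversion Eb; subst. exfalso; apply H1. apply (in_map fst) in Ha; auto.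
  - eauto. Qed.

Ltac gen_tac P :=
  match goal with
  | [ H1 : typ ?G ?M ?a, H2 : typ ?G ?M ?b, HB : is_basis ?G |- le TOmega (TInter ?a ?b) \/ _ ] =>
      apply (clos_inter P); [ | | eapply typ_wf; eauto | eapply typ_wf; eauto | | ]
  | [ H1 : typ ?G ?M ?a, HB : is_basis ?G, Hl : le ?a ?b |- le TOmega ?b \/ _ ] =>
      refine (clos_sub P _ a b _ _ _ _); [ | eapply typ_wf; eauto | auto | | auto]
  end.

Lemma gen_var G E s : typ G E s -> is_basis G -> forall x, E = Var x ->
  le TOmega s \/ exists t, In (x,t) G /\ le t s.
Proof.
  induction 1; intros HB x0 HE; try discriminate.
  - inversion HE; subst. right; exists s; split; auto. apply le_refl.
  - gen_tac (fun a => exists t, In (x0,t) G /\ le t a).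
    + intros a b [u [Ht Hl]] Wa Hab Wb. exists u; split; auto. tr a; auto.
    + intros a b [u [Ht Hl]] [u' [Ht' Hl']] Wa Wb.
      rewrite (nodup_uniq G x0 u' u (proj1 HB) Ht' Ht) in Hl'.
      exists u; split; auto. apply le_inter_glb; auto.
    + eauto.
    + eauto.
  - left; apply le_refl.
  - gen_tac (fun a => exists t, In (x0,t) G /\ le t a).
    + intros a b [u [Ht Hl]] Wa Hab Wb. exists u; split; auto. tr a; auto.
    + eauto.
Qed.

Lemma big_sub l1 l2 : (forall a, In a l1 -> wf_ty a) -> incl l2 l1 -> le (big_inter l1) (big_inter l2).
Proof. intros H Hi; apply big_glb; intros a Ha; apply big_mem; auto. Qed.

Definition arr (p : ty * ty) := TArrow (fst p) (snd p).

Lemma gen_lam G E s : typ G E s -> is_basis G -> forall x M, E = Lam x M ->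
  le TOmega s \/ exists ps : list (ty * ty),
       (forall p, In p ps ->
          wf_ty (fst p) /\ wf_ty (snd p) /\ ~ In x (dom G) /\
          typ ((x, fst p) :: G) M (snd p)) /\
       le (big_inter (map (fun p => TArrow (fst p) (snd p)) ps)) s.
Proof.
  set (Q := fun G x M (a : ty) => exists ps : list (ty * ty),
       (forall p, In p ps ->
          wf_ty (fst p) /\ wf_ty (snd p) /\ ~ In x (dom G) /\
          typ ((x, fst p) :: G) M (snd p)) /\
       le (big_inter (map (fun p => TArrow (fst p) (snd p)) ps)) a).
  assert (Wps : forall G x M ps, (forall p, In p ps ->
          wf_ty (fst p) /\ wf_ty (snd p) /\ ~ In x (dom G) /\
          typ ((x, fst p) :: G) M (snd p)) ->
          forall a, In a (map (fun p => TArrow (fst p) (snd p)) ps) -> wf_ty a).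
  { intros G0 x M ps H a Ha. apply in_map_iff in Ha as [p [<- Hp]]. apply H in Hp. simpl; tauto. }
  assert (up : forall G x M a b, Q G x M a -> wf_ty a -> le a b -> wf_ty b -> Q G x M b).
  { intros G0 x M a b [ps [H1 H2]] Wa Hab Wb. exists ps; split; auto.
    apply (le_trans _ a); auto. }
  assert (PI : forall G x M a b, Q G x M a -> Q G x M b -> wf_ty a -> wf_ty b -> Q G x M (TInter a b)).
  { intros G0 x M a b [ps [H1 H2]] [ps' [H1' H2']] Wa Wb. exists (ps ++ ps'). split.
    intros p Hp; apply in_app_or in Hp as [Hp|Hp]; auto.
    assert (W : forall a, In a (map (fun p => TArrow (fst p) (snd p)) (ps ++ ps')) -> wf_ty a).
    { apply (Wps G0 x M). intros p Hp; apply in_app_or in Hp as [Hp|Hp]; auto. }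
    rewrite map_app in *. apply le_inter_glb.
    - apply (le_trans _ (big_inter (map (fun p => TArrow (fst p) (snd p)) ps))); auto.
      apply big_wf; eauto. apply big_sub; auto. intros z Hz; apply in_or_app; auto.
    - apply (le_trans _ (big_inter (map (fun p => TArrow (fst p) (snd p)) ps'))); auto.
      apply big_wf; eauto. apply big_sub; auto. intros z Hz; apply in_or_app; auto. }
  induction 1; intros HB x0 M0 HE; try discriminate.
  - inversion HE; subst. right. exists [(s,t)]. split; [|apply le_refl].
    intros p [<-|[]]; simpl. split; auto. split; [|split; auto].
    eapply typ_wf; eauto. destruct HB as [HN HW]; split. simpl; constructor; auto.
    intros y u [E|Hi]; [inversion E; subst; auto|eauto].
  - gen_tac (Q G x0 M0); eauto.
  - left; apply le_refl.
  - gen_tac (Q G x0 M0); eauto.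
Qed.

Lemma gen_app G E s : typ G E s -> is_basis G -> forall M N, E = App M N ->
  le TOmega s \/ exists t, wf_ty t /\ typ G M (TArrow t s) /\ typ G N t.
Proof.
  induction 1; intros HB M0 N0 HE; try discriminate.
  - inversion HE; subst. right. exists s; split; auto. eapply typ_wf; eauto.
  - gen_tac (fun a => exists t, wf_ty t /\ typ G M0 (TArrow t a) /\ typ G N0 t).
    + intros a b [u [W1 [T1 T2]]] Wa Hab Wb. exists u; split; auto; split; auto.
      apply (t_sub _ _ _ _ T1); simpl; auto. apply le_arrow; auto. apply le_refl.
    + intros a b [u [W1 [T1 T2]]] [u' [W1' [T1' T2']]] Wa Wb. exists (TInter u u').
      split; [simpl; auto|split; [|apply t_inter; auto]].
      apply (t_sub _ _ _ _ (t_inter _ _ _ _ T1 T1')); [|simpl; auto].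
      tr (TInter (TArrow (TInter u u') a) (TArrow (TInter u u') b)).
      apply inter_mono; simpl; auto; apply le_arrow; try apply le_refl.
      apply le_inter_l. apply le_inter_r.
      apply le_arrow_inter.
    + eauto.
    + eauto.
  - left; apply le_refl.
  - gen_tac (fun a => exists t, wf_ty t /\ typ G M0 (TArrow t a) /\ typ G N0 t).
    + intros a b [u [W1 [T1 T2]]] Wa Hab Wb. exists u; split; auto; split; auto.
      apply (t_sub _ _ _ _ T1); simpl; auto. apply le_arrow; auto. apply le_refl.
    + eauto.
Qed.

Lemma gen_proj G E s : typ G E s -> is_basis G -> forall M l, E = Proj M l ->
  le TOmega s \/ typ G M (TRField l s).
Proof.
  induction 1; intros HB M0 l0 HE; try discriminate.
  - gen_tac (fun a => typ G M0 (TRField l0 a)).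
    + intros a b T1 Wa Hab Wb. apply (t_sub _ _ _ _ T1); simpl; auto. apply le_field; auto.
    + intros a b T1 T2 Wa Wb. apply (t_sub _ _ _ _ (t_inter _ _ _ _ T1 T2)); simpl; auto.
      apply le_field_inter.
    + eauto.
    + eauto.
  - left; apply le_refl.
  - gen_tac (fun a => typ G M0 (TRField l0 a)).
    + intros a b T1 Wa Hab Wb. apply (t_sub _ _ _ _ T1); simpl; auto. apply le_field; auto.
    + eauto.
  - inversion HE; subst; auto.
Qed.

Lemma gen_ext G E s : typ G E s -> is_basis G -> forall M fs, E = Ext M fs ->
  le TOmega s \/ exists r1 r2, is_rty r1 /\ is_rty r2 /\ wf_ty r1 /\ wf_ty r2 /\
       typ G M r1 /\ typ G (Rcd fs) r2 /\
       (forall l, In l (map fst fs) <-> In l (lbl r2)) /\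
       le (TRPlus r1 r2) s.
Proof.
  induction 1; intros HB M0 fs0 HE; try discriminate.
  - gen_tac (fun a => exists r1 r2, is_rty r1 /\ is_rty r2 /\ wf_ty r1 /\ wf_ty r2 /\
       typ G M0 r1 /\ typ G (Rcd fs0) r2 /\
       (forall l, In l (map fst fs0) <-> In l (lbl r2)) /\
       le (TRPlus r1 r2) a).
    + intros a b [r1 [r2 [R1 [R2 [W1 [W2 [T1 [T2 [L Hl]]]]]]]]] Wa Hab Wb.
      exists r1, r2; do 7 (split; [auto|]). tr a; auto.
    + intros a b [r1 [r2 [R1 [R2 [W1 [W2 [T1 [T2 [L Hl]]]]]]]]]
                 [r1' [r2' [R1' [R2' [W1' [W2' [T1' [T2' [L' Hl']]]]]]]]] Wa Wb.
      exists (TInter r1 r1'), (TInter r2 r2'); simpl; do 6 (split; [auto using t_inter|]).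
      split. { intros l; split. intros Hi; apply in_or_app; left; apply L; auto.
        intros Hi; apply in_app_or in Hi as [Hi|Hi]; [apply L|apply L']; auto. }
      { assert (Hd : le (TRPlus (TInter r1 r1') (TInter r2 r2'))
              (TInter (TRPlus r1 (TInter r2 r2')) (TRPlus r1' (TInter r2 r2')))).
        { apply le_plus_distr1; simpl; auto. }
        apply le_inter_glb.
        -- tr (TInter (TRPlus r1 (TInter r2 r2')) (TRPlus r1' (TInter r2 r2'))); auto.
           tr (TRPlus r1 (TInter r2 r2')). apply le_inter_l.
           tr (TRPlus r1 r2); auto. apply RM; simpl; auto. apply le_inter_l.
           intros x Hx; apply in_app_or in Hx as [Hx|Hx]; auto. apply L, L'; auto.
        -- tr (TInter (TRPlus r1 (TInter r2 r2')) (TRPlus r1' (TInter r2 r2'))); auto.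
           tr (TRPlus r1' (TInter r2 r2')). apply le_inter_r.
           tr (TRPlus r1' r2'); auto. apply RM; simpl; auto. apply le_inter_r.
           intros x Hx; apply in_app_or in Hx as [Hx|Hx]; auto. apply L', L; auto. }
    + eauto.
    + eauto.
  - left; apply le_refl.
  - gen_tac (fun a => exists r1 r2, is_rty r1 /\ is_rty r2 /\ wf_ty r1 /\ wf_ty r2 /\
       typ G M0 r1 /\ typ G (Rcd fs0) r2 /\
       (forall l, In l (map fst fs0) <-> In l (lbl r2)) /\
       le (TRPlus r1 r2) a).
    + intros a b [r1 [r2 [R1 [R2 [W1 [W2 [T1 [T2 [L Hl]]]]]]]]] Wa Hab Wb.
      exists r1, r2; do 7 (split; [auto|]). tr a; auto.
    + eauto.
  - inversion HE; subst. right. exists r1, r2; do 7 (split; [eauto using typ_wf|]). apply le_refl.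
Qed.

Lemma F2_in {A B} (R : A -> B -> Prop) l1 l2 y : Forall2 R l1 l2 -> In y l2 -> exists x, In x l1 /\ R x y.
Proof. induction 1; simpl; intros Hi; [destruct Hi|]. destruct Hi as [<-|Hi]; eauto.
  destruct (IHForall2 Hi) as [z [? ?]]; eauto. Qed.

Lemma F2_map {A B} (R : A -> B -> Prop) (g : A -> B) l : (forall x, In x l -> R x (g x)) -> Forall2 R l (map g l).
Proof. induction l; simpl; intros H; constructor; auto. Qed.

Lemma F2_inter G (fs : list (label * term)) ss1 ss2 :
  Forall2 (fun f t => wf_ty t /\ typ G (snd f) t) fs ss1 ->
  Forall2 (fun f t => wf_ty t /\ typ G (snd f) t) fs ss2 ->
  exists ss, Forall2 (fun f t => wf_ty t /\ typ G (snd f) t) fs ss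
  /\ Forall2 (fun a b => le a b /\ wf_ty a /\ wf_ty b) ss ss1
  /\ Forall2 (fun a b => le a b /\ wf_ty a /\ wf_ty b) ss ss2.
Proof.
  intros H1; revert ss2; induction H1 as [|f a fs ss1 [Wa Ta] H1 IH]; intros ss2 H2.
  - inversion H2; subst. exists []; repeat constructor.
  - inversion H2 as [|? b ? ss2' [Wb Tb] H2']; subst.
    destruct (IH _ H2') as [ss [A [B C]]].
    exists (TInter a b :: ss); repeat split; constructor; simpl; auto using t_inter.
    split; auto. apply le_inter_l. split; auto. apply le_inter_r.
Qed.


Lemma combine_wfL {A} (fs : list (label * A)) ss (R : A -> ty -> Prop) :
  Forall2 (fun f t => wf_ty t /\ R (snd f) t) fs ss -> wfL (combine (map fst fs) ss).
Proof. intros H l t Hi. apply in_combine_r in Hi. destruct (F2_in _ _ _ _ H Hi) as [x [_ [W _]]]; auto. Qed.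

Lemma combine_map {A} (fs : list (label * A)) (g : label * A -> ty) :
  combine (map fst fs) (map g fs) = map (fun f => (fst f, g f)) fs.
Proof. induction fs; simpl; f_equal; auto. Qed.

Lemma nf_pw ls ss ss' : Forall2 (fun a b => le a b /\ wf_ty a /\ wf_ty b) ss ss' ->
  le (nf (combine ls ss)) (nf (combine ls ss')).
Proof. revert ss ss'; induction ls as [|l ls IH]; intros ss ss' H; simpl. apply le_refl.
  destruct H as [|a b ss ss' [H1 [H2 H3]] H]; simpl. apply le_refl.
  apply inter_mono; simpl; auto. 
  - apply nf_wf. intros c d Hi. apply in_combine_r in Hi.
    clear -H Hi. induction H; simpl in *; [destruct Hi|]. destruct Hi as [<-|Hi]; intuition.
  - apply le_field; auto.
Qed.

Lemma gen_rcd G E s : typ G E s -> is_basis G -> forall fs, E = Rcd fs -> wf_term E ->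
  le TOmega s \/ exists ss : list ty,
       Forall2 (fun f t => wf_ty t /\ typ G (snd f) t) fs ss /\
       le (rec_ty (combine (map fst fs) ss)) s.
Proof.
  induction 1; intros HB fs0 HE HW; try discriminate.
  - gen_tac (fun a => exists ss : list ty,
       Forall2 (fun f t => wf_ty t /\ typ G (snd f) t) fs0 ss /\
       le (rec_ty (combine (map fst fs0) ss)) a).
    + intros a b [ss [F Hl]] Wa Hab Wb. exists ss; split; auto.
      tr a; auto.
    + intros a b [ss1 [F1 Hl1]] [ss2 [F2 Hl2]] Wa Wb.
      destruct (F2_inter _ _ _ _ F1 F2) as [ss [F [P1 P2]]].
      exists ss; split; auto.
      assert (WL : forall ss, Forall2 (fun f t => wf_ty t /\ typ G (snd f) t) fs0 ss -> wfL (combine (map fst fs0) ss)).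
      { intros; eapply combine_wfL; eauto. }
      apply le_inter_glb.
      * apply (le_trans _ (rec_ty (combine (map fst fs0) ss1))); auto. apply rec_wf; auto.
        apply (le_trans _ (nf (combine (map fst fs0) ss))); auto with wfdb. apply rec_nf; auto.
        apply (le_trans _ (nf (combine (map fst fs0) ss1))); auto with wfdb. apply nf_pw; auto. apply rec_nf; auto.
      * apply (le_trans _ (rec_ty (combine (map fst fs0) ss2))); auto. apply rec_wf; auto.
        apply (le_trans _ (nf (combine (map fst fs0) ss))); auto with wfdb. apply rec_nf; auto.
        apply (le_trans _ (nf (combine (map fst fs0) ss2))); auto with wfdb. apply nf_pw; auto. apply rec_nf; auto.
    + intros; eapply IHtyp1; eauto.
    + intros; eapply IHtyp2; eauto.
  - left; apply le_refl.
  - gen_tac (fun a => exists ss : list ty,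
       Forall2 (fun f t => wf_ty t /\ typ G (snd f) t) fs0 ss /\
       le (rec_ty (combine (map fst fs0) ss)) a).
    + intros a b [ss [F Hl]] Wa Hab Wb. exists ss; split; auto.
      tr a; auto.
    + eauto.
  - inversion HE; subst. right. exists (map (fun _ => TOmega) fs0).
    assert (F : Forall2 (fun f t => wf_ty t /\ typ G (snd f) t) fs0 (map (fun _ => TOmega) fs0)).
    { apply F2_map. intros; split; simpl; auto. apply t_omega. }
    split; auto.
    assert (W := combine_wfL _ _ _ F).
    apply (le_trans _ (nf (combine (map fst fs0) (map (fun _ => TOmega) fs0)))); auto with wfdb.
    apply rec_nf; auto. apply nf_le_empty; auto.
  - inversion HE; subst. inversion HW; subst. right.
    set (g := fun f : label * term => if Nat.eqb (fst f) l then s else TOmega).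
    exists (map g fs0).
    assert (Ws : wf_ty s) by (eapply typ_wf; eauto).
    assert (F : Forall2 (fun f t => wf_ty t /\ typ G (snd f) t) fs0 (map g fs0)).
    { apply F2_map. intros [l' M'] Hi; unfold g; simpl.
      destruct (Nat.eqb_spec l' l); [subst|split; simpl; auto using t_omega].
      rewrite (nodup_uniq fs0 l M' M); auto. }
    split; auto.
    assert (W := combine_wfL _ _ _ F).
    apply (le_trans _ (nf (combine (map fst fs0) (map g fs0)))); auto with wfdb.
    apply rec_nf; auto. apply nf_mem; auto.
    rewrite combine_map.
    replace (l, s) with ((fun f => (fst f, g f)) (l, M)) by (simpl; unfold g; simpl; rewrite Nat.eqb_refl; auto).
    apply (in_map (fun f => (fst f, g f)) fs0 (l, M)); auto.
Qed.

Lemma rcd_typ G fs0 fs ss : Forall2 (fun f t => wf_ty t /\ typ G (snd f) t) fs ss -> incl fs fs0 ->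
  typ G (Rcd fs0) (rec_ty (combine (map fst fs) ss)).
Proof.
  induction 1 as [|[l M] t fs ss [W T] H IH]; intros Hi; simpl. apply t_rempty.
  assert (T' : typ G (Rcd fs0) (TRField l t)).
  { apply (t_rfield _ _ _ M); auto. apply Hi; simpl; auto. }
  assert (IH' : typ G (Rcd fs0) (rec_ty (combine (map fst fs) ss))).
  { apply IH. intros x Hx; apply Hi; simpl; auto. }
  destruct (combine (map fst fs) ss); auto. apply t_inter; auto.
Qed.

Theorem lemma3p14 (G : basis) (s : ty) :
  is_basis G -> wf_ty s -> ~ le TOmega s ->
  (* (1) *)
  (forall x : var,
     typ G (Var x) s <-> exists t, In (x, t) G /\ le t s) /\
  (* (2) *)
  (forall (x : var) (M : term), wf_term (Lam x M) ->
     typ G (Lam x M) s <->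
     exists ps : list (ty * ty),
       (forall p, In p ps ->
          wf_ty (fst p) /\ wf_ty (snd p) /\ ~ In x (dom G) /\
          typ ((x, fst p) :: G) M (snd p)) /\
       le (big_inter (map (fun p => TArrow (fst p) (snd p)) ps)) s) /\
  (* (3) *)
  (forall M N : term, wf_term (App M N) ->
     typ G (App M N) s <->
     exists t, wf_ty t /\ typ G M (TArrow t s) /\ typ G N t) /\
  (* (4) *)
  (forall fs : list (label * term), wf_term (Rcd fs) ->
     typ G (Rcd fs) s <->
     exists ss : list ty,
       Forall2 (fun f t => wf_ty t /\ typ G (snd f) t) fs ss /\
       le (rec_ty (combine (map fst fs) ss)) s) /\
  (* (5) *)
  (forall (M : term) (l : label), wf_term (Proj M l) ->
     typ G (Proj M l) s <-> typ G M (TRField l s)) /\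
  (* (6) *)
  (forall (M : term) (fs : list (label * term)), wf_term (Ext M fs) ->
     typ G (Ext M fs) s <->
     exists r1 r2, is_rty r1 /\ is_rty r2 /\ wf_ty r1 /\ wf_ty r2 /\
       typ G M r1 /\ typ G (Rcd fs) r2 /\
       (forall l, In l (map fst fs) <-> In l (lbl r2)) /\
       le (TRPlus r1 r2) s).
Proof.
  intros HB Ws Hn.
  split; [|split; [|split; [|split; [|split]]]].
  - intros x; split.
    + intros H; destruct (gen_var _ _ _ H HB x eq_refl) as [H'|H']; [contradiction|auto].
    + intros [t [Hi Hl]]. apply (t_sub _ _ t); auto. apply t_var; auto.
  - intros x M HW; split.
    + intros H; destruct (gen_lam _ _ _ H HB x M eq_refl) as [H'|H']; [contradiction|auto].
    + intros [ps [Hps Hl]].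
      apply (t_sub _ _ (big_inter (map (fun p => TArrow (fst p) (snd p)) ps))); auto.
      apply big_typ. intros a Ha. apply in_map_iff in Ha as [p [<- Hp]].
      destruct (Hps p Hp) as [W1 [W2 [Hx T]]]. apply t_lam; auto.
  - intros M N HW; split.
    + intros H; destruct (gen_app _ _ _ H HB M N eq_refl) as [H'|H']; [contradiction|auto].
    + intros [t [W [T1 T2]]]. eapply t_app; eauto.
  - intros fs HW; split.
    + intros H; destruct (gen_rcd _ _ _ H HB fs eq_refl HW) as [H'|H']; [contradiction|auto].
    + intros [ss [F Hl]]. apply (t_sub _ _ (rec_ty (combine (map fst fs) ss))); auto.
      apply rcd_typ; auto. intros x; auto.
  - intros M l HW; split.
    + intros H; destruct (gen_proj _ _ _ H HB M l eq_refl) as [H'|H']; [contradiction|auto].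
    + intros H; apply t_proj; auto.
  - intros M fs HW; split.
    + intros H; destruct (gen_ext _ _ _ H HB M fs eq_refl) as [H'|H']; [contradiction|auto].
    + intros [r1 [r2 [R1 [R2 [W1 [W2 [T1 [T2 [L Hl]]]]]]]]].
      apply (t_sub _ _ (TRPlus r1 r2)); auto. apply t_ext; auto.
Qed.
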